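(* Let $n\ge3$, let $h$ be a hermitian form on $\mathbb{C}^n$ of signature $(n-1,1)$, let $r\ge5$ be odd and let $x=(L_1,\dots,L_r)$ be a semi-stable $r$-tuple of isotropic lines. Then there exists $k\in\{1,\dots,r\}$ with the following property: for all $i,j\in\{1,\dots,r\}$ such that the lines $L_i,L_j,L_k$ are pairwise distinct, there exists a derangement $\sigma$ of $\{1,\dots,r\}$ such that (1) $\sigma(i)=j$, $\sigma(j)=k$, $\sigma(k)=i$; (2) the restriction of $\sigma$ to $\{1,\dots,r\}\smallsetminus\{i,j,k\}$ is a derangement of order $2$; (3) $s_\sigma(x)\ne0$.
   Context: A derangement is a fixed-point-free permutation. $s_\sigma(x)=\prod_{l=1}^r h(v_l,v_{\sigma(l)})$ with $v_l$ a generator of $L_l$ ($h$ linear in the second variable). The $r$-tuple of isotropic lines is semi-stable if the $r$-tuple of flags $(L_l,L_l^\perp)$ is semi-stable for the diagonal $\mathrm{SL}_n(\mathbb{C})$-action on the $r$-th power of the variety of line-hyperplane flags, linearized via $(L,H)\mapsto(L,H^\perp)\in\mathbb{P}(\mathbb{C}^n)\times\mathbb{P}((\mathbb{C}^n)^\vee)$ and $\bigotimes\mathrm{pr}^*(\mathcal{O}(1)\boxtimes\mathcal{O}(1))$ (some invariant section of a positive tensor power does not vanish). *)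

(* Defs.v *)
From HB Require Import structures.
From mathcomp Require Import all_boot all_order all_algebra all_fingroup.
From mathcomp Require Import reals complex.
From mathcomp Require Import mpoly.
Set Implicit Arguments. Unset Strict Implicit. Unset Printing Implicit Defensive.
Import Order.TTheory GRing.Theory Num.Theory.
Local Open Scope ring_scope.

Section Defs.
Variable C : numClosedFieldType.

Definition herm {n} (H : 'M[C]_n) (v w : 'rV[C]_n) : C :=
  ((map_mx Num.conj v) *m H *m w^T) 0 0.

Definition is_hermitian {n} (H : 'M[C]_n) : Prop := H^T = map_mx Num.conj H.

Definition signature_n1_1 {n} (H : 'M[C]_n.+1) : Prop :=
  exists P : 'M[C]_n.+1, P \in unitmx /\
    (map_mx Num.conj P)^T *m H *m P =
      diag_mx (\row_(a < n.+1) (if a == ord_max then -1 else 1)).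

(* coefficient row of the functional w |-> h(v,w), which spans (v^perp)^perp *)
Definition hfun {n} (H : 'M[C]_n) (v : 'rV[C]_n) : 'rV[C]_n :=
  map_mx Num.conj v *m H.

(* coordinates of (v_1,phi_1,...,v_r,phi_r) as a point of C^(r*(n+n)) *)
Definition coords {r n} (v phi : 'I_r -> 'rV[C]_n) : 'I_(r * (n + n)) -> C :=
  fun k => mxvec (\matrix_(l < r) row_mx (v l) (phi l)) 0 k.

Definition multihom {r n} (m : nat) (p : {mpoly C[r * (n + n)]}) : Prop :=
  forall mon, mon \in msupp p -> forall l : 'I_r,
    (\sum_(a < n) mon (mxvec_index l (lshift n a)) = m)%N /\
    (\sum_(a < n) mon (mxvec_index l (rshift n a)) = m)%N.

(* SL_n-invariance for g.v = g v and g.phi = phi o g^-1 *)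
Definition SL_invariant {r n} (p : {mpoly C[r * (n + n)]}) : Prop :=
  forall g : 'M[C]_n, \det g = 1 -> forall v phi : 'I_r -> 'rV[C]_n,
    p.@[coords (fun l => v l *m g^T) (fun l => phi l *m invmx g)] =
    p.@[coords v phi].

(* the r-tuple of flags (L_l, L_l^perp), L_l = <v_l>, is GIT semi-stable for
   the linearization O(1)[x]O(1) on P(C^n) x P((C^n)^v) *)
Definition semistable {r n} (H : 'M[C]_n) (v : 'I_r -> 'rV[C]_n) : Prop :=
  exists m : nat, (0 < m)%N /\ exists p : {mpoly C[r * (n + n)]},
    multihom m p /\ SL_invariant p /\ p.@[coords v (fun l => hfun H (v l))] != 0.

Definition isotropic_line {n} (H : 'M[C]_n) (v : 'rV[C]_n) : Prop :=
  v != 0 /\ herm H v v = 0.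

Definition derangement {r} (s : {perm 'I_r}) : Prop := forall l, s l != l.

Definition s_sigma {r n} (H : 'M[C]_n) (v : 'I_r -> 'rV[C]_n) (s : {perm 'I_r}) : C :=
  \prod_(l < r) herm H (v l) (v (s l)).

End Defs.

(* Main.v *)
Require Import Defs.
From HB Require Import structures.
From mathcomp Require Import all_boot all_order all_algebra all_fingroup.
From mathcomp Require Import reals complex.
From mathcomp Require Import mpoly.
From mathcomp Require Import ring zify.
From Stdlib Require Import FunctionalExtensionality.
Set Implicit Arguments. Unset Strict Implicit. Unset Printing Implicit Defensive.
Import Order.TTheory GRing.Theory Num.Theory.
Section Comb.
Variable T : finType.
Variable e : rel T.
Hypothesis erefl : forall x, e x x.
Hypothesis eqv : forall x y, e x y -> e x =1 e y.

Lemma esym x y : e x y -> e y x.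
Proof. by move=> h; rewrite -(eqv h x) erefl. Qed.

Lemma matching (s : seq T) : uniq s -> ~~ odd (size s) ->
  (forall x, (count (e x) s).*2 <= size s) ->
  exists f : T -> T, forall x, x \in s ->
    [/\ f x \in s, f x != x, f (f x) = x & ~~ e x (f x)].
Proof.
elim: (size s).+1 {-2}s (ltnSn (size s)) => // N IH {}s sN us es hc.
case: (@nilP _ s) => [-> | ne]; first by exists id.
have [x0 x0s] : exists x0, x0 \in s by case: s {sN us es hc} ne => // x0 ? _; exists x0; rewrite inE eqxx.
case: (@arg_maxnP T x0 (fun y => y \in s) (fun y => count (e y) s) x0s) => a aS amax.
have : has (predC (e a)) s.
  rewrite has_count; have := count_predC (e a) s; have := hc a.
  have : 0 < count (e a) s by rewrite -has_count; apply/hasP; exists a.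
  move: (count _ _) (count _ _) (size s); clear; lia.
case/hasP => b bs /= nab.
have nab' : a != b by apply: contraNneq nab => ->; rewrite erefl.
have bra : b \in rem a s by rewrite (perm_mem (perm_to_rem aS)) inE eq_sym (negPf nab') in bs.
set s' := rem b (rem a s).
have pe : perm_eq s [:: a, b & s'].
  apply: (perm_trans (perm_to_rem aS)); rewrite perm_cons; exact: perm_to_rem.
have us' : uniq [:: a, b & s'] by rewrite -(perm_uniq pe).
have cnt : forall p, count p s = p a + p b + count p s'.
  by move=> p; rewrite (seq.permP pe) /= addnA.
have sz : size s = (size s').+2 by rewrite (perm_size pe).
move: us' => /= /andP [/norP [_ aS'] /andP [bs' us']].
have [f hf] : exists f : T -> T, forall x, x \in s' ->
    [/\ f x \in s', f x != x, f (f x) = x & ~~ e x (f x)].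
  apply: IH => //; first (move: sN; rewrite sz; move: (size s') => m; clear; lia).
    by move: es; rewrite sz /=; rewrite negbK.
  move=> x; have := hc x; rewrite cnt sz.
  case exa: (e x a); case exb: (e x b) => /=.
  - by move: nab; rewrite -(eqv exa b) exb.
  - move: (count _ _) (size s') => c m; clear; lia.
  - move: (count _ _) (size s') => c m; clear; lia.
  - rewrite !add0n => h.
    case: (leqP (count (e x) s').*2 (size s')) => // lt.
    have hx : (size s').+2 <= (count (e x) s').*2.
      move: es; rewrite sz /= negbK => es.
      move: lt es; clear; move: (count _ _) (size s') => c m lt es.
      rewrite -(odd_double_half m) (negbTE es) add0n in lt *; lia.
    have cx : count (e x) s = count (e x) s' by rewrite cnt exa exb.
    have [y ys exy] : exists2 y, y \in s & e x y.
      apply/hasP; rewrite has_count cx; move: hx; clear; lia.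
    have cy : count (e y) s = count (e x) s by apply: eq_count => z; rewrite (eqv exy).
    have ca := amax y ys; rewrite /geq cy in ca.
    have c0 : count (predI (e a) (e x)) s = 0.
      apply/eqP; rewrite -leqn0 leqNgt -has_count; apply/hasP => -[z _ /= /andP [eaz exz]].
      by move: exa; rewrite (eqv exz) (esym eaz).
    have cU := count_predUI (e a) (e x) s; rewrite c0 addn0 in cU.
    have cC := count_predC (predU (e a) (e x)) s.
    have : 0 < count (predC (predU (e a) (e x))) s.
      rewrite -has_count; apply/hasP; exists b => //=; by rewrite (negbTE nab) exb.
    move: hx ca cU cC; rewrite sz -cx; clear.
    move: (count _ s) (count _ s) (count _ s) (count _ s) (size s') => c1 c2 c3 c4 m; lia.
exists (fun x => if x == a then b else if x == b then a else f x) => x xs.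
have bs'' : forall z, z \in s' -> (z != a) && (z != b).
  by move=> z zs; apply/andP; split; apply/eqP => zab; move: zs; rewrite zab; [exact/negP|exact/negP].
case: (eqVneq x a) => [-> | xa].
  have ba : (b == a) = false by rewrite eq_sym (negbTE nab').
  by rewrite eqxx ba bs nab.
case: (eqVneq x b) => [-> | xb].
  rewrite ?eqxx aS nab' /=; split => //; apply/negP => h; move/negP: nab; apply; exact: esym h.
have xs' : x \in s' by move: xs; rewrite (perm_mem pe) !inE (negbTE xa) (negbTE xb).
have [fs fx ffx efx] := hf x xs'.
have /andP [fa fb] := bs'' _ fs.
rewrite (negbTE fa) (negbTE fb) ffx; split => //.
by rewrite (perm_mem pe) !inE fs !orbT.
Qed.

Lemma comb_main : odd #|T| -> (forall x, (count (e x) (enum T)).*2 < #|T|) ->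
  exists k : T, forall i j : T, ~~ e i j -> ~~ e j k -> ~~ e i k ->
    exists F : T -> T, [/\ injective F, 
      [/\ F i = j, F j = k & F k = i],
      (forall l, l \notin [:: i; j; k] -> F l != l /\ F (F l) = l)
    & forall l, ~~ e l (F l)].
Proof.
move=> oddT hT.
have [k0 _] : exists k0 : T, true.
  by case: (pickP T) => [x _| h]; [exists x | move: oddT; rewrite eq_card0].
case: (@arg_maxnP T k0 predT (fun y => count (e y) (enum T)) isT) => k _ kmax.
exists k => i j nij njk nik.
have neq : forall a b, ~~ e a b -> a != b by move=> a b; apply: contraNneq => ->.
have nji : ~~ e j i by apply/negP => /esym; apply/negP.
have nki : ~~ e k i by apply/negP => /esym; apply/negP.
have nkj : ~~ e k j by apply/negP => /esym; apply/negP.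
set s0 := [seq l <- enum T | l \notin [:: i; j; k]].
have pe : perm_eq (enum T) [:: i, j, k & s0].
  apply: uniq_perm; first exact: enum_uniq.
    rewrite !cons_uniq filter_uniq ?enum_uniq // !inE !mem_filter !inE !eqxx !orbT /= (negbTE (neq _ _ nij)) (negbTE (neq _ _ njk)) (negbTE (neq _ _ nik)) /= ?andbT //.
  move=> l; rewrite mem_enum !inE mem_filter !inE mem_enum.
  by case: (l == i); case: (l == j); case: (l == k).
have cnt : forall p, count p (enum T) = p i + p j + p k + count p s0.
  by move=> p; rewrite (seq.permP pe) /= !addnA.
have sz : #|T| = (size s0).+3 by rewrite cardE (perm_size pe).
have [f hf] : exists f : T -> T, forall x, x \in s0 ->
    [/\ f x \in s0, f x != x, f (f x) = x & ~~ e x (f x)].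
  apply: matching.
  - by rewrite filter_uniq ?enum_uniq.
  - by move: oddT; rewrite sz /= negbK.
  move=> x; have := hT x; rewrite cnt.
  have oS : ~~ odd (size s0) by move: oddT; rewrite sz /= negbK.
  case exi: (e x i); [|case exj: (e x j); [|case exk: (e x k)]].
    rewrite (eqv exi j) (eqv exi k) (negbTE nij) (negbTE nik) sz.
    move: (count _ _) (size s0) => c m; clear; lia.
  - rewrite (eqv exj k) (negbTE njk) sz.
    move: (count _ _) (size s0) => c m; clear; lia.
  - rewrite sz; move: (count _ _) (size s0) => c m; clear; lia.
  rewrite !add0n => h.
  case: (leqP (count (e x) s0).*2 (size s0)) => // lt.
  have hx : (size s0).+2 <= (count (e x) s0).*2.
    move: lt oS; clear; move: (count _ _) (size s0) => c m lt es.
    rewrite -(odd_double_half m) (negbTE es) add0n in lt *; lia.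
  have cx : count (e x) (enum T) = count (e x) s0 by rewrite cnt exi exj exk.
  have [y _ exy] : exists2 y, y \in enum T & e x y.
    apply/hasP; rewrite has_count cx; move: hx; clear; lia.
  have cy : count (e y) (enum T) = count (e x) (enum T) by apply: eq_count => z; rewrite (eqv exy).
  have ca := kmax y isT; rewrite /geq cy in ca.
  have c0 : count (predI (e k) (e x)) (enum T) = 0.
    apply/eqP; rewrite -leqn0 leqNgt -has_count; apply/hasP => -[z _ /= /andP [ekz exz]].
    by move: exk; rewrite (eqv exz) (esym ekz).
  have cU := count_predUI (e k) (e x) (enum T); rewrite c0 addn0 in cU.
  have cC := count_predC (predU (e k) (e x)) (enum T).
  have : 2 <= count (predC (predU (e k) (e x))) (enum T).
    by rewrite cnt /= (negbTE nki) (negbTE nkj) exi exj.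
  move: hx ca cU cC; rewrite -cardE sz -cx; clear.
  move: (count _ (enum T)) (count _ (enum T)) (count _ (enum T)) (count _ (enum T)) (size s0) => c1 c2 c3 c4 m; lia.
have nin : forall l, l \notin [:: i; j; k] -> l \in s0.
  by move=> l ln; rewrite mem_filter ln mem_enum.
have ins : forall l, l \in s0 -> l \notin [:: i; j; k].
  by move=> l; rewrite mem_filter => /andP [].
have nij' := neq _ _ nij; have njk' := neq _ _ njk; have nik' := neq _ _ nik.
pose F l := if l == i then j else if l == j then k else if l == k then i else f l.
pose G l := if l == j then i else if l == k then j else if l == i then k else f l.
have Fo : forall l, l \notin [:: i; j; k] -> F l = f l.
  by move=> l; rewrite /F /G !inE !negb_or => /and3P [/negbTE -> /negbTE -> /negbTE ->].
have Go : forall l, l \notin [:: i; j; k] -> G l = f l.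
  by move=> l; rewrite /F /G !inE !negb_or => /and3P [/negbTE -> /negbTE -> /negbTE ->].
have Fi : F i = j by rewrite /F eqxx.
have Fj : F j = k by rewrite /F eqxx eq_sym (negbTE nij').
have Fk : F k = i by rewrite /F eqxx eq_sym (negbTE nik') eq_sym (negbTE njk').
have Gj : G j = i by rewrite /G eqxx.
have Gk : G k = j by rewrite /G eqxx eq_sym (negbTE njk').
have Gi : G i = k by rewrite /G eqxx (negbTE nij') (negbTE nik').
have FG : cancel F G.
  move=> l; case: (boolP (l \in [:: i; j; k])).
    by rewrite !inE => /or3P [] /eqP ->; rewrite ?Fi ?Fj ?Fk ?Gi ?Gj ?Gk.
  move=> ln; have [fs _ ffl _] := hf l (nin l ln).
  by rewrite Fo // Go ?ffl // ins.
exists F; split => //.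
- exact: can_inj FG.
- move=> l ln; have [fs fl ffl _] := hf l (nin l ln).
  by rewrite !(Fo l ln) (Fo _ (ins _ fs)) ffl; split.
- move=> l; case: (boolP (l \in [:: i; j; k])).
    by rewrite !inE => /or3P [] /eqP ->; rewrite ?Fi ?Fj ?Fk.
  move=> ln; have [fs fl ffl efl] := hf l (nin l ln).
  by rewrite Fo.
Qed.
End Comb.

Lemma cc (T : finType) (P : pred T) : #|P| = count P (enum T).
Proof. by rewrite cardE /enum_mem size_filter (all_filterP _) //; apply/allP. Qed.

Local Open Scope ring_scope.
Section S.
Variable C : numClosedFieldType.
Variable n : nat.
Implicit Types (H : 'M[C]_n) (x y z : 'rV[C]_n).
Lemma hermDr H x y z : herm H x (y + z) = herm H x y + herm H x z.
Proof. by rewrite /herm linearD /= mulmxDr mxE. Qed.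
Lemma hermZr H x a y : herm H x (a *: y) = a * herm H x y.
Proof. by rewrite /herm linearZ /= -scalemxAr mxE. Qed.
Lemma hermDl H x y z : herm H (x + y) z = herm H x z + herm H y z.
Proof. by rewrite /herm map_mxD !mulmxDl mxE. Qed.
Lemma hermZl H x a y : herm H (a *: x) y = Num.conj a * herm H x y.
Proof. by rewrite /herm map_mxZ -!scalemxAl mxE. Qed.
Lemma hermE H x y : herm H x y = \sum_j \sum_i Num.conj (x 0 i) * H i j * y 0 j.
Proof.
rewrite /herm mxE; apply: eq_bigr => j _; rewrite !mxE big_distrl /=.
by apply: eq_bigr => i _; rewrite !mxE.
Qed.
Lemma herm_sym H x y : is_hermitian H -> herm H y x = Num.conj (herm H x y).
Proof.
move=> hH; rewrite !hermE rmorph_sum exchange_big /=; apply: eq_bigr => i _.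
rewrite rmorph_sum; apply: eq_bigr => j _.
have := hH; rewrite /is_hermitian => /matrixP /(_ i j); rewrite !mxE /= => ->.
by rewrite !rmorphM /= !conjCK; ring.
Qed.
Lemma herm_base H (P : 'M[C]_n) x y :
  herm H (x *m P^T) (y *m P^T) = herm ((map_mx Num.conj P)^T *m H *m P) x y.
Proof.
rewrite /herm map_mxM trmx_mul trmxK map_trmx !mulmxA //.
Qed.
Lemma herm_diag (d : 'rV[C]_n) x y :
  herm (diag_mx d) x y = \sum_j Num.conj (x 0 j) * d 0 j * y 0 j.
Proof.
rewrite /herm mxE; apply: eq_bigr => j _; rewrite !mxE.
rewrite (bigD1 j) //= big1 ?addr0; first by rewrite !mxE eqxx mulr1n.
by move=> i /negPf ij; rewrite !mxE ij mulr0n mulr0 ?mul0r.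
Qed.
End S.
Section T.
Variable C : numClosedFieldType.
Variable n : nat.
Definition Jd : 'rV[C]_n.+1 := \row_(a < n.+1) (if a == ord_max then -1 else 1).
Lemma posJ (z : 'rV[C]_n.+1) : z 0 ord_max = 0 -> herm (diag_mx Jd) z z = 0 -> z = 0.
Proof.
move=> z0; rewrite herm_diag (bigD1 ord_max) //= z0 mulr0 add0r.
have ge0 : forall j, (j != ord_max) -> 0 <= Num.conj (z 0 j) * Jd 0 j * z 0 j.
  by move=> j /negPf jm; rewrite !mxE jm mulr1 mulrC mul_conjC_ge0.
move/psumr_eq0P => /(_ ge0) h; apply/rowP => j; rewrite mxE.
case: (eqVneq j ord_max) => [->//|jm].
by have := h j jm; rewrite !mxE (negPf jm) mulr1 mulrC => /eqP; rewrite mul_conjC_eq0 => /eqP.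
Qed.
Lemma iso_orth (H : 'M[C]_n.+1) v w : is_hermitian H -> signature_n1_1 H ->
  isotropic_line H v -> isotropic_line H w -> herm H v w = 0 -> (v == w)%MS.
Proof.
move=> hH [P [Pu PHP]] [v0 hv] [w0 hw] hvw.
set Q := (invmx P)^T.
have QP : forall z : 'rV[C]_n.+1, z = (z *m Q) *m P^T.
  by move=> z; rewrite -mulmxA -trmx_mul mulmxV // trmx1 mulmx1.
have hb : forall z z', herm H z z' = herm (diag_mx Jd) (z *m Q) (z' *m Q).
  by move=> z z'; rewrite {1}(QP z) {1}(QP z') herm_base PHP.
have hz : forall z, herm H z z = 0 -> (z *m Q) 0 ord_max = 0 -> z = 0.
  by move=> z hzz zm; rewrite (QP z) (posJ zm) ?mul0mx // -hb.
set a := (v *m Q) 0 ord_max; set b := (w *m Q) 0 ord_max.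
have a0 : a != 0 by apply/eqP => a0; move/eqP: v0; apply; apply: hz hv a0.
have b0 : b != 0 by apply/eqP => b0; move/eqP: w0; apply; apply: hz hw b0.
have hwv : herm H w v = 0 by rewrite herm_sym // hvw conjC0.
have z0 : b *: v + (- a) *: w = 0.
  apply: hz.
    by rewrite !hermDl !hermDr !hermZl !hermZr hv hw hvw hwv !mulr0 !addr0.
  have sE : forall (c : C) (M : 'rV[C]_n.+1) j, (c *: M) 0 j = c * M 0 j by move=> *; rewrite mxE.
  have aE : forall (M N : 'rV[C]_n.+1) j, (M + N) 0 j = M 0 j + N 0 j by move=> *; rewrite mxE.
  by rewrite mulmxDl -!scalemxAl aE !sE -/a -/b; ring.
have e1 : v = (a / b) *: w.
  apply: (scalerI b0); rewrite scalerA mulrCA divff // mulr1.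
  by apply/eqP; rewrite -subr_eq0 -scaleNr; apply/eqP.
apply/andP; split; apply/sub_rVP; first by exists (a / b).
exists (b / a); rewrite e1 scalerA mulrA divfK // divff // scale1r //.
Qed.
End T.

Section Scal.
Variable C : numClosedFieldType.
Variables r n : nat.

Lemma coordsE (X Y : 'I_r -> 'rV[C]_n) l (a : 'I_n) :
  coords X Y (mxvec_index l (lshift n a)) = X l 0 a /\
  coords X Y (mxvec_index l (rshift n a)) = Y l 0 a.
Proof. by rewrite /coords !mxvecE !mxE (unsplitK (inl _ a)) (unsplitK (inr _ a)). Qed.

Lemma coords_ind (P : 'I_(r * (n + n)) -> Prop) :
  (forall l a, P (mxvec_index l (lshift n a))) ->
  (forall l a, P (mxvec_index l (rshift n a))) -> forall k, P k.
Proof.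
move=> h1 h2 k; case/mxvec_indexP: k => l jj.
by case: (split_ordP jj) => a ->; [apply: h1 | apply: h2].
Qed.

Lemma scale_eval m (p : {mpoly C[r * (n + n)]}) (c d : 'I_r -> C) (X Y : 'I_r -> 'rV[C]_n) :
  multihom m p ->
  p.@[coords (fun l => c l *: X l) (fun l => d l *: Y l)] =
  (\prod_l (c l * d l) ^+ m) * p.@[coords X Y].
Proof.
move=> hp.
pose lam := coords (fun l => const_mx (c l)) (fun l => const_mx (d l) : 'rV[C]_n).
have hl : forall k, coords (fun l => c l *: X l) (fun l => d l *: Y l) k = lam k * coords X Y k.
  apply: coords_ind => l a; have [e1 e2] := coordsE (fun l => c l *: X l) (fun l => d l *: Y l) l a;
  have [f1 f2] := coordsE X Y l a; have [g1 g2] := coordsE (fun l => const_mx (c l)) (fun l => const_mx (d l) : 'rV[C]_n) l a;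
  rewrite /lam ?e1 ?f1 ?g1 ?e2 ?f2 ?g2 !mxE //.
rewrite (meval_eq _ hl) !mevalE big_distrr /=; apply: eq_big_seq => mon mon_in.
rewrite mulrCA; congr (_ * _).
under eq_bigr => i _ do rewrite exprMn.
rewrite big_split /=; congr (_ * _).
rewrite (reindex _ (curry_mxvec_bij r (n + n))) /=.
transitivity (\prod_l \prod_(jj < n + n) lam (mxvec_index l jj) ^+ mon (mxvec_index l jj)).
  by rewrite pair_bigA; apply: eq_bigr => -[].
apply: eq_bigr => l _; rewrite big_split_ord /= /lam.
have [h1 h2] := hp mon mon_in l.
under eq_bigr => a _ do rewrite (coordsE _ _ l a).1 mxE.
under [X in _ * X = _]eq_bigr => a _ do rewrite (coordsE _ _ l a).2 mxE.
by rewrite !prodrXr h1 h2 exprMn.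
Qed.

Lemma coords_lin (A B D A' B' D' : 'I_r -> 'rV[C]_n) (t : C) k :
  coords (fun l => A l + t *: B l + t ^+ 2 *: D l) (fun l => A' l + t *: B' l + t ^+ 2 *: D' l) k
  = coords A A' k + t * coords B B' k + t ^+ 2 * coords D D' k.
Proof.
move: k; apply: coords_ind => l a.
  by rewrite !(coordsE _ _ l a).1 !mxE.
by rewrite !(coordsE _ _ l a).2 !mxE.
Qed.
End Scal.

Lemma meval_horner (C : numClosedFieldType) N (p : {mpoly C[N]}) (Y : 'I_N -> {poly C}) t :
  (\sum_(mon <- msupp p) (p@_mon)%:P * \prod_i Y i ^+ mon i).[t] = p.@[fun i => (Y i).[t]].
Proof.
rewrite mevalE horner_sum; apply: eq_bigr => mon _.
rewrite hornerCM horner_prod; congr (_ * _); apply: eq_bigr => i _.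
by rewrite horner_exp.
Qed.

Lemma poly_vanish (C : numClosedFieldType) (a : C) N1 N2 (Q : {poly C}) :
  (N1 < N2)%N -> (forall t : C, t != 0 -> a * t ^+ N1 = t ^+ N2 * Q.[t]) -> a = 0.
Proof.
move=> lt h.
pose A := a%:P * 'X^N1 - 'X^N2 * Q.
have A0 : A = 0.
  apply/eqP; apply/negPn/negP => nA.
  pose rs := [seq (i.+1)%:R : C | i <- iota 0 (size A)].
  suff: (size rs < size A)%N by rewrite size_map size_iota ltnn.
  apply: max_poly_roots nA _ _.
    apply/allP => x /mapP [i _ ->]; rewrite /root /A !hornerE.
    by rewrite h ?subrr // pnatr_eq0.
  rewrite map_inj_uniq ?iota_uniq // => i j /eqP; rewrite eqr_nat eqSS => /eqP.
  done.
have := congr1 (fun P : {poly C} => P`_N1) A0.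
by rewrite /A coefB coefCM coefXn eqxx mulr1 coefXnM lt subr0 coef0.
Qed.

Lemma det_rank1 (R : comNzRingType) n (u : 'M[R]_(n, 1)) (w : 'M[R]_(1, n)) :
  \det (1%:M + u *m w) = 1 + (w *m u) 0 0.
Proof.
pose L := block_mx 1%:M 0 w 1%:M : 'M[R]_(n + 1).
pose M := block_mx (1%:M + u *m w) u 0 1%:M : 'M[R]_(n + 1).
pose Rm := block_mx 1%:M 0 (- w) 1%:M : 'M[R]_(n + 1).
have e : L *m M *m Rm = block_mx 1%:M u 0 (1%:M + w *m u).
  rewrite /L /M /Rm !mulmx_block !mulmx1 !mul1mx !mul0mx !mulmx0 !addr0 !add0r.
  rewrite ?mulmxDr ?mulmxDl ?mulmx1 ?mulmxN ?mulNmx ?mulmxA mul1mx.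
  congr block_mx.
  - by rewrite addrK.
  - by rewrite [- _ - _]addrC addrACA !subrr addr0.
  - by rewrite addrC.
have := congr1 determinant e.
rewrite !det_mulmx /L /M /Rm det_lblock det_ublock det_ublock det_lblock !det1 !mul1r !mulr1.
by move=> ->; rewrite det_mx11 !mxE.
Qed.

Section G.
Variable C : numClosedFieldType.
Variable n : nat.
Variables E u psi phi : 'rV[C]_n.
Hypothesis hpE : (psi *m E^T) 0 0 = 1.
Hypothesis hpu : (psi *m u^T) 0 0 = 0.
Hypothesis hfE : (phi *m E^T) 0 0 = 0.
Hypothesis hfu : (phi *m u^T) 0 0 = 1.

Let P1 := E^T *m psi.
Let P2 := u^T *m phi.

Lemma m11 (M : 'M[C]_1) c : M 0 0 = c -> M = c%:M.
Proof. by move=> h; rewrite [M]mx11_scalar h. Qed.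

Lemma P11 : P1 *m P1 = P1.
Proof. by rewrite /P1 mulmxA -(mulmxA E^T) (m11 hpE) mulmx1. Qed.
Lemma P22 : P2 *m P2 = P2.
Proof. by rewrite /P2 mulmxA -(mulmxA u^T) (m11 hfu) mulmx1. Qed.
Lemma P12 : P1 *m P2 = 0.
Proof. by rewrite /P1 /P2 mulmxA -(mulmxA E^T) (m11 hpu) mul_mx_scalar scale0r mul0mx. Qed.
Lemma P21 : P2 *m P1 = 0.
Proof. by rewrite /P1 /P2 mulmxA -(mulmxA u^T) (m11 hfE) mul_mx_scalar scale0r mul0mx. Qed.

Lemma prodP a b a' b' :
  (1%:M + a *: P1 + b *: P2) *m (1%:M + a' *: P1 + b' *: P2) =
  1%:M + (a + a' + a * a') *: P1 + (b + b' + b * b') *: P2.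
Proof.
rewrite !mulmxDl !mulmxDr !mul1mx !mulmx1 -!scalemxAl -!scalemxAr.
rewrite P11 P22 P12 P21 !scaler0 !addr0.
by apply/matrixP => i j; rewrite !mxE; ring.
Qed.

Definition gt (t : C) := 1%:M + (t - 1) *: P1 + (t^-1 - 1) *: P2.
Definition gti (t : C) := 1%:M + (t^-1 - 1) *: P1 + (t - 1) *: P2.

Lemma gt_inv t : t != 0 -> gt t *m gti t = 1%:M.
Proof.
move=> t0; rewrite /gt /gti prodP.
have -> : t - 1 + (t^-1 - 1) + (t - 1) * (t^-1 - 1) = 0 by field.
have -> : t^-1 - 1 + (t - 1) + (t^-1 - 1) * (t - 1) = 0 by field.
by rewrite !scale0r !addr0.
Qed.

Lemma gt_det t : t != 0 -> \det (gt t) = 1.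
Proof.
move=> t0.
have -> : gt t = (1%:M + (t - 1) *: P1 + 0 *: P2) *m (1%:M + 0 *: P1 + (t^-1 - 1) *: P2).
  by rewrite prodP !mulr0 !mul0r !addr0 add0r.
rewrite !scale0r !addr0 det_mulmx /P1 /P2 !scalemxAr !det_rank1.
have scE : forall (c : C) (M : 'M[C]_1), (c *: M) 0 0 = c * M 0 0 by move=> *; rewrite mxE.
by rewrite -!scalemxAl !scE hpE hfu !mulr1; field.
Qed.

Lemma gt_invmx t : t != 0 -> invmx (gt t) = gti t.
Proof.
move=> t0; have h := gt_inv t0.
have [gu _] := mulmx1_unit h.
by rewrite -[RHS]mul1mx -(mulVmx gu) -mulmxA h mulmx1.
Qed.

Lemma gt_row t x : x *m (gt t)^T =
  x + ((t - 1) * (x *m psi^T) 0 0) *: E + ((t^-1 - 1) * (x *m phi^T) 0 0) *: u.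
Proof.
rewrite /gt /P1 /P2 !linearD /= !linearZ /= !trmx_mul !trmxK trmx1.
rewrite mulmx1 !mulmxA.
rewrite [in X in X = _](mx11_scalar (x *m psi^T)) [in X in X = _](mx11_scalar (x *m phi^T)).
by rewrite !mul_scalar_mx !scalerA.
Qed.

Lemma gti_row t y : y *m gti t =
  y + ((t^-1 - 1) * (y *m E^T) 0 0) *: psi + ((t - 1) * (y *m u^T) 0 0) *: phi.
Proof.
rewrite /gti /P1 /P2 !mulmxDr mulmx1 -!scalemxAr !mulmxA.
rewrite [in X in X = _](mx11_scalar (y *m E^T)) [in X in X = _](mx11_scalar (y *m u^T)).
by rewrite !mul_scalar_mx !scalerA.
Qed.
End G.

Section D.
Variable C : numClosedFieldType.
Variable n : nat.

Lemma hfunE (H : 'M[C]_n) x y : (hfun H x *m y^T) 0 0 = herm H x y.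
Proof. by []. Qed.

Lemma dotC (x y : 'rV[C]_n) : (x *m y^T) 0 0 = (y *m x^T) 0 0.
Proof. by rewrite -(trmxK (x *m y^T)) trmx_mul trmxK mxE. Qed.

Lemma hfunZ (H : 'M[C]_n) a x : hfun H (a *: x) = Num.conj a *: hfun H x.
Proof. by rewrite /hfun map_mxZ -scalemxAl. Qed.
End D.

Section D2.
Variable C : numClosedFieldType.
Variable n : nat.
Lemma exists_dual (H : 'M[C]_n.+1) E : signature_n1_1 H -> isotropic_line H E ->
  exists w, herm H E w = 1.
Proof.
move=> [P [Pu PHP]] [E0 hE].
set Q := (invmx P)^T.
have QP : forall z : 'rV[C]_n.+1, z = (z *m Q) *m P^T.
  by move=> z; rewrite -mulmxA -trmx_mul mulmxV // trmx1 mulmx1.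
have hb : forall z z', herm H z z' = herm (diag_mx (Jd C n)) (z *m Q) (z' *m Q).
  by move=> z z'; rewrite {1}(QP z) {1}(QP z') herm_base PHP.
have a0 : (E *m Q) 0 ord_max != 0.
  apply/eqP => a0; move/eqP: E0; apply; rewrite (QP E) (posJ a0) ?mul0mx // -hb hE //.
pose w0 : 'rV[C]_n.+1 := delta_mx 0 ord_max *m P^T.
have hw0 : herm H E w0 = - Num.conj ((E *m Q) 0 ord_max).
  rewrite hb /w0 -mulmxA -trmx_mul mulVmx // trmx1 mulmx1 herm_diag.
  rewrite (bigD1 ord_max) //= big1 ?addr0.
    by rewrite !mxE !eqxx /= mulr1 mulrN1.
  by move=> j /negPf jm; rewrite !mxE jm andbF mulr0.
exists ((herm H E w0)^-1 *: w0); by rewrite hermZr mulVf // hw0 oppr_eq0 conjC_eq0.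
Qed.
End D2.

Section D3.
Variable C : numClosedFieldType.
Variable n : nat.

Lemma count_bound (H : 'M[C]_n.+1) r (v : 'I_r -> 'rV[C]_n.+1) :
  is_hermitian H -> signature_n1_1 H -> (forall l, isotropic_line H (v l)) ->
  semistable H v -> forall l0, (#|[pred l | (v l0 == v l)%MS]|.*2 <= r)%N.
Proof.
move=> hH sig iso [m [m0 [p [hp [hinv hpx]]]]] l0.
rewrite leqNgt; apply/negP => lt.
move/eqP: hpx; apply.
set E := v l0; have isoE := iso l0; have [E0 hE] := isoE.
have [w hw] := exists_dual sig isoE.
pose c0 := herm H w w / 2%:R.
pose u := w + (- c0) *: E.
have hwE : herm H w E = 1 by rewrite herm_sym // hw conjC1.
have hc0 : Num.conj c0 = c0.
  by rewrite /c0 fmorph_div /= conjC_nat -herm_sym.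
have hEu : herm H E u = 1 by rewrite hermDr hermZr hE mulr0 addr0.
have huu : herm H u u = 0.
  rewrite !hermDl !hermDr !hermZl !hermZr hE hw hwE rmorphN /= hc0 !mulr0 !addr0 mulr1.
  by rewrite /c0; field.
have hUE : herm H u E = 1 by rewrite herm_sym // hEu conjC1.
set phi := hfun H E; set psi := hfun H u.
have hpE : (psi *m E^T) 0 0 = 1 by rewrite hfunE.
have hpu : (psi *m u^T) 0 0 = 0 by rewrite hfunE.
have hfE : (phi *m E^T) 0 0 = 0 by rewrite hfunE.
have hfu : (phi *m u^T) 0 0 = 1 by rewrite hfunE.
pose inS l := (v l0 == v l)%MS.
have inSE : forall l, inS l -> exists a, v l = a *: E.
  by move=> l /andP [_ /sub_rVP].
pose al l := (v l *m psi^T) 0 0.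
pose be l := (v l *m phi^T) 0 0.
pose ga l := (hfun H (v l) *m E^T) 0 0.
pose de l := (hfun H (v l) *m u^T) 0 0.
pose A l := if inS l then v l else be l *: u.
pose B l := if inS l then 0 else v l - al l *: E - be l *: u.
pose D l := if inS l then 0 else al l *: E.
pose A' l := if inS l then hfun H (v l) else ga l *: psi.
pose B' l := if inS l then 0 else hfun H (v l) - ga l *: psi - de l *: phi.
pose D' l := if inS l then 0 else de l *: phi.
pose lam (t : C) l := if inS l then t else t^-1.
have hrow : forall t, t != 0 -> forall l,
    v l *m (gt E u psi phi t)^T = lam t l *: (A l + t *: B l + t ^+ 2 *: D l).
  move=> t t0 l; rewrite gt_row /lam /A /B /D -/(al l) -/(be l).
  case: ifP => hl.
    have [a ea] := inSE l hl.
    have -> : al l = a by rewrite /al dotC hfunE ea hermZr hUE mulr1.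
    have -> : be l = 0 by rewrite /be dotC hfunE ea hermZr hE mulr0.
    by rewrite ea; apply/rowP => j; rewrite !mxE; ring.
  by apply/rowP => j; rewrite !mxE; field.
have hcol : forall t, t != 0 -> forall l,
    hfun H (v l) *m gti E u psi phi t = lam t l *: (A' l + t *: B' l + t ^+ 2 *: D' l).
  move=> t t0 l; rewrite gti_row /lam /A' /B' /D' -/(ga l) -/(de l).
  case: ifP => hl.
    have [a ea] := inSE l hl.
    have -> : ga l = 0 by rewrite /ga hfunE ea hermZl hE mulr0.
    have -> : de l = Num.conj a by rewrite /de hfunE ea hermZl hEu mulr1.
    by rewrite ea hfunZ; apply/rowP => j; rewrite !mxE; ring.
  by apply/rowP => j; rewrite !mxE; field.
pose Yp k : {poly C} := (coords A A' k)%:P + (coords B B' k)%:P * 'X + (coords D D' k)%:P * 'X^2.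
pose Q := \sum_(mon <- msupp p) (p@_mon)%:P * \prod_i Yp i ^+ mon i.
have key : forall t, t != 0 -> p.@[coords v (fun l => hfun H (v l))] =
    (\prod_l (lam t l * lam t l) ^+ m) * Q.[t].
  move=> t t0.
  transitivity (p.@[coords (fun l => lam t l *: (A l + t *: B l + t ^+ 2 *: D l))
                           (fun l => lam t l *: (A' l + t *: B' l + t ^+ 2 *: D' l))]).
    rewrite -(hinv _ (gt_det hpE hpu hfE hfu t0) v (fun l => hfun H (v l))).
    congr (meval (coords _ _) p); apply: functional_extensionality => l /=.
      exact: hrow.
    by rewrite (gt_invmx hpE hpu hfE hfu t0) hcol.
  rewrite (scale_eval _ _ _ _ hp) meval_horner; congr (_ * _).
  apply: meval_eq => k; rewrite coords_lin /Yp !hornerD !hornerCM hornerC hornerX hornerXn; ring.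
have hci : #|[pred l | (v l0 == v l)%MS]| = #|inS| by apply: eq_card.
have hcC := cardC inS; rewrite card_ord in hcC.
rewrite hci in lt.
have hprod : forall t, t != 0 -> (\prod_l (lam t l * lam t l) ^+ m) * t ^+ (2 * (m * #|predC inS|)) =
    t ^+ (2 * (m * #|inS|)).
  move=> t t0; rewrite (bigID inS) /=.
  under eq_bigr => l hl do rewrite /lam hl.
  under [X in _ * X * _]eq_bigr => l hl do rewrite /lam (negbTE hl).
  rewrite !prodr_const -!exprM !(exprM t 2) -invfM -expr2 exprVn.
  by rewrite -mulrA mulVf ?mulr1 // expf_neq0 // expf_neq0.
apply: (poly_vanish (N1 := 2 * (m * #|predC inS|)) (N2 := 2 * (m * #|inS|)) (Q := Q)).
  have e2 : #|predC inS| = #|[predC inS]| by apply: eq_card.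
  have lt' : (#|inS| + #|[predC inS]| < #|inS|.*2)%N by rewrite hcC.
  by rewrite ltn_pmul2l // ltn_pmul2l // e2; move: lt'; rewrite -addnn ltn_add2l.
by move=> t t0; rewrite (key t t0) mulrAC hprod.
Qed.
End D3.

Unset Implicit Arguments.
Theorem lemma4p24 (R : realType) (n : nat) (H : 'M[R[i]]_n.+1) (r : nat)
  (v : 'I_r -> 'rV[R[i]]_n.+1) :
  (3 <= n.+1)%N -> is_hermitian H -> signature_n1_1 H ->
  (5 <= r)%N -> odd r ->
  (forall l, isotropic_line H (v l)) -> semistable H v ->
  exists k : 'I_r, forall i j : 'I_r,
    ~~ (v i == v j)%MS -> ~~ (v j == v k)%MS -> ~~ (v i == v k)%MS ->
    exists s : {perm 'I_r},
      [/\ derangement s,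
          [/\ s i = j, s j = k & s k = i],
          (forall l, l \notin [:: i; j; k] -> s l != l /\ s (s l) = l)
        & s_sigma H v s != 0].
Proof.
move=> _ hH sig _ oddr iso ss.
pose e : rel 'I_r := fun a b => (v a == v b)%MS.
have erefl : forall x, e x x by move=> x; rewrite /e /= !submx_refl.
have eqv : forall x y, e x y -> e x =1 e y.
  move=> x y /andP [xy yx] z; rewrite /e.
  apply/idP/idP => /andP [h1 h2]; apply/andP; split.
  - exact: submx_trans yx h1.
  - exact: submx_trans h2 xy.
  - exact: submx_trans xy h1.
  - exact: submx_trans h2 yx.
have oddT : odd #|'I_r| by rewrite card_ord.
have hT : forall x, ((count (e x) (enum 'I_r)).*2 < #|'I_r|)%N.
  move=> x; rewrite card_ord -cc.
  have := count_bound hH sig iso ss x.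
  have -> : #|[pred l | (v x == v l)%MS]| = #|e x| by apply: eq_card.
  rewrite leq_eqVlt => /orP [/eqP h|//].
  have : odd r = odd (#|e x|.*2) by rewrite h.
  by rewrite odd_double oddr.
have [k hk] := comb_main erefl eqv oddT hT.
exists k => i j nij njk nik.
have [F [Finj [Fi Fj Fk] Fo Fe]] := hk i j nij njk nik.
exists (perm Finj); split; rewrite ?permE //.
- move=> l; rewrite permE; apply: contraNneq (Fe l) => ->; exact: erefl.
- by move=> l ln; rewrite !permE; exact: Fo.
- apply/prodf_neq0 => l _; rewrite permE; apply/eqP => h.
  by move/negP: (Fe l); apply; exact: iso_orth hH sig (iso l) (iso (F l)) h.
Qed.
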